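(* Let $(S,\mathscr{S})$ be a measurable space, $n\le N$, and $X=(X_1,\ldots,X_n)$ an exchangeable random element of $S^n$. If $\mathcal L$ is an extending functional with $\|\mathcal L\|=1$ such that the set function $F_{\mathcal L}(A):=\mathcal L(\mathbf 1_A)$, $A\in\mathscr{S}^N$, is countably additive on the algebra generated by the measurable rectangles of $S^N$, then there is a unique exchangeable probability measure $Q$ on $S^N$ such that $Q(A)=F_{\mathcal L}(A)$ for all measurable rectangles $A\subset S^N$, and $Q$ is an $N$-extension of the law of $X$, i.e. $Q(A\times S^{N-n})=\mathbb{P}(X\in A)$ for all $A\in\mathscr{S}^n$.
   Context: A measurable rectangle of $S^N$ is a set $B_1\times\cdots\times B_N$ with $B_i\in\mathscr{S}$. $b(S^k)$ is the space of bounded measurable real functions on $S^k$ with the sup norm. With $\mathfrak S[n,N]$ the set of injections $\{1,\ldots,n\}\to\{1,\ldots,N\}$ and $(N)_n=N(N-1)\cdots(N-n+1)$, $U^N_ng(x_1,\ldots,x_N)=\frac1{(N)_n}\sum_{\sigma\in\mathfrak S[n,N]}g(x_{\sigma(1)},\ldots,x_{\sigma(n)})$. The primitive extending functional $\mathcal E$ on $U^N_n(b(S^n))$ is $\mathcal E(U^N_ng)=\mathbb{E}\,g(X)$ (well defined). An extending functional is a linear functional $\mathcal L:b(S^N)\to\mathbb{R}$ which is invariant under permutations of the arguments of its input, agrees with $\mathcal E$ on $U^N_n(b(S^n))$, and has $\|\mathcal L\|=\|\mathcal E\|$. A probability measure on $S^N$ is exchangeable if invariant under coordinate permutations. *)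

(* Defs.v *)
From HB Require Import structures.
From mathcomp Require Import all_boot all_order all_algebra all_fingroup.
From mathcomp Require Import all_classical all_reals all_analysis.
Set Implicit Arguments. Unset Strict Implicit. Unset Printing Implicit Defensive.
Import Order.TTheory GRing.Theory Num.Theory numFieldNormedType.Exports.
Local Open Scope classical_set_scope.
Local Open Scope ring_scope.

(* S^k is modelled by k.-tuple S, with the library's product sigma-algebra
   (generated by the coordinate projections = generated by measurable rectangles). *)

Section Defs.
Context {R : realType} {d : measure_display} {S : measurableType d}.

Definition bmeas (k : nat) (f : k.-tuple S -> R) : Prop :=
  measurable_fun setT f /\ exists M : R, forall x, `|f x| <= M.

Definition perm_tuple (N : nat) (s : 'S_N) (x : N.-tuple S) : N.-tuple S :=
  [tuple tnth x (s i) | i < N].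

Definition UN (N n : nat) (g : n.-tuple S -> R) (x : N.-tuple S) : R :=
  (N ^_ n)%:R^-1 *
  \sum_(s : {ffun 'I_n -> 'I_N} | injectiveb s) g [tuple tnth x (s i) | i < n].

Definition rectangles (N : nat) : set (set (N.-tuple S)) :=
  [set A | exists B : 'I_N -> set S,
     (forall i, measurable (B i)) /\ A = [set x | forall i, B i (tnth x i)]].

Definition exchangeable_measure (N : nat) (Q : set (N.-tuple S) -> \bar R) : Prop :=
  forall (s : 'S_N) (A : set (N.-tuple S)), measurable A ->
    Q (perm_tuple s @^-1` A) = Q A.

Definition norm_functional (N : nat) (L : (N.-tuple S -> R) -> R) : \bar R :=
  ereal_sup [set (`|L f|)%:E | f in [set f | bmeas f /\ forall x, `|f x| <= 1]].

Section Ext.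
Context {dO : measure_display} {Omega : measurableType dO}.

Definition expect (P : probability Omega R) (n : nat) (X : Omega -> n.-tuple S)
  (g : n.-tuple S -> R) : R := fine (\int[P]_w (g (X w))%:E).

Definition norm_primitive (P : probability Omega R) (N n : nat)
  (X : Omega -> n.-tuple S) : \bar R :=
  ereal_sup [set (`|expect P X g|)%:E |
               g in [set g | bmeas g /\ forall x, `|@UN N n g x| <= 1]].

Definition extending_functional (P : probability Omega R) (N n : nat)
  (X : Omega -> n.-tuple S) (L : (N.-tuple S -> R) -> R) : Prop :=
  [/\
      (forall (a b : R) f g, bmeas f -> bmeas g ->
          L (fun x => a * f x + b * g x) = a * L f + b * L g),
      (forall (s : 'S_N) f, bmeas f -> L (f \o perm_tuple s) = L f),
      (forall g, bmeas g -> L (@UN N n g) = expect P X g) &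
      norm_functional L = norm_primitive P N X].
End Ext.

Definition setalgebra (T : Type) (G : set (set T)) : Prop :=
  [/\ G setT, (forall A, G A -> G (~` A)) & (forall A B, G A -> G B -> G (A `|` B))].

Definition countably_additive_on (T : Type) (Alg : set (set T)) (F : set T -> R) : Prop :=
  forall A : nat -> set T, (forall k, Alg (A k)) -> trivIset setT A ->
    Alg (\bigcup_k A k) ->
    (fun m => \sum_(0 <= k < m) F (A k)) @ \oo --> F (\bigcup_k A k).

End Defs.

(* Main.v *)
Require Import Defs.
From HB Require Import structures.
From mathcomp Require Import all_boot all_order all_algebra all_fingroup all_solvable.
From mathcomp Require Import all_classical all_reals all_analysis.
From mathcomp Require Import lra measurable_realfun.
Import Order.TTheory GRing.Theory Num.Theory numFieldNormedType.Exports.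
Local Open Scope classical_set_scope.
Local Open Scope ring_scope.
Set Implicit Arguments. Unset Strict Implicit. Unset Printing Implicit Defensive.


Section Alg.
Context {d : measure_display} {S : measurableType d} (N : nat).
Definition Alg : set (set (N.-tuple S)) := smallest (@setalgebra _) (@rectangles d S N).

Lemma Alg_setalgebra : setalgebra Alg.
Proof.
split.
- by move=> M [[]].
- move=> A HA M [MM GM]; have [_ HC _] := MM; apply: HC; exact: HA.
- move=> A B HA HB M [MM GM]; have [_ _ HU] := MM; apply: HU; [exact: HA|exact: HB].
Qed.

Lemma rect_Alg : @rectangles d S N `<=` Alg.
Proof. exact: sub_smallest. Qed.

Lemma rect_meas (A : set (N.-tuple S)) : rectangles A -> measurable A.
Proof.
move=> [B [mB ->]].
have -> : [set x : N.-tuple S | forall i, B i (tnth x i)] =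
   \bigcap_(i in [set: 'I_N]) (setT `&` (fun x : N.-tuple S => tnth x i) @^-1` B i).
  apply/seteqP; split => x /= H i; first by move=> _; split.
  by have [] := H i I.
apply: fin_bigcap_measurable; first exact: finite_finset.
by move=> i _; exact: (measurable_tnth i measurableT (mB i)).
Qed.

Lemma Alg_meas : Alg `<=` measurable.
Proof.
apply: smallest_sub; last by move=> A /rect_meas.
split; [exact: measurableT| exact: measurableC | exact: measurableU].
Qed.
End Alg.
Definition alg_disp : measure_display. Proof. exact: default_measure_display. Qed.

Section T0.
Context {d : measure_display} {S : measurableType d} (N : nat).
Definition T0 : Type := N.-tuple S.
HB.instance Definition _ := Pointed.on T0.
Lemma Alg0 : @Alg d S N set0.
Proof. have [HT HC _] := Alg_setalgebra (S:=S) N. by rewrite -setCT; apply: HC. Qed.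
Lemma AlgU : setU_closed (@Alg d S N).
Proof. have [HT HC HU] := Alg_setalgebra (S:=S) N. exact: HU. Qed.
Lemma AlgC : setC_closed (@Alg d S N).
Proof. have [HT HC HU] := Alg_setalgebra (S:=S) N. exact: HC. Qed.
HB.instance Definition _ := @isAlgebraOfSets.Build alg_disp T0 (@Alg d S N) Alg0 AlgU AlgC.
End T0.
Section X.
Context {d : measure_display} {S : measurableType d} (N : nat).

Lemma coord_rect (i : 'I_N) (B : set S) : measurable B ->
  @rectangles d S N (setT `&` (fun x : N.-tuple S => tnth x i) @^-1` B).
Proof.
move=> mB; exists (fun j => if j == i then B else setT); split.
  by move=> j; case: ifP.
apply/seteqP; split => x /=.
  by move=> [_ Bx] j; case: eqP => [->|].
by move=> H; split => //; have := H i; rewrite eqxx.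
Qed.

Lemma meas_sub (A : set (N.-tuple S)) : measurable A -> <<s @Alg d S N >> A.
Proof.
rewrite /measurable /=; apply: smallest_sub; first exact: smallest_sigma_algebra.
elim/big_ind: _ => //.
- by move=> X Y HX HY Z [/HX|/HY].
- move=> i _ Z /= [B mB <-]; apply: sub_sigma_algebra; apply: rect_Alg.
  exact: coord_rect.
Qed.

Lemma Alg_sub_meas (A : set (N.-tuple S)) : <<s @Alg d S N >> A -> measurable A.
Proof.
apply: smallest_sub; last exact: Alg_meas.
split; [exact: measurable0 | by move=> X mX; rewrite setTD; exact: measurableC|].
by move=> F mF; exact: bigcupT_measurable.
Qed.
End X.
Section Meas.
Context {R : realType} {d : measure_display} {S : measurableType d} (N : nat)
  (L : (N.-tuple S -> R) -> R).
Hypothesis Lpos : forall A, @Alg d S N A -> 0 <= L (\1_A).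
Hypothesis L0 : L (\1_set0) = 0.
Hypothesis Lca : countably_additive_on (@Alg d S N) (fun A => L (\1_A)).
Hypothesis L1 : L (\1_setT) = 1.

Definition mu0 (A : set (T0 N)) : \bar R := (Num.max (L (\1_A)) 0)%:E.

Lemma mu0E A : Alg A -> mu0 A = (L (\1_A))%:E.
Proof. by move=> HA; rewrite /mu0 max_l // Lpos. Qed.

Let mu0_0 : mu0 set0 = 0%E.
Proof. by rewrite /mu0 L0 maxxx. Qed.

Let mu0_ge0 A : (0 <= mu0 A)%E.
Proof. by rewrite /mu0 lee_fin le_max lexx orbT. Qed.

Let mu0_ssa : semi_sigma_additive mu0.
Proof.
move=> F mF tF mU; rewrite mu0E //.
have -> : (fun n => (\sum_(0 <= i < n) mu0 (F i))%E) =
   (fun n => (\sum_(0 <= i < n) L (\1_(F i)))%:E).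
  apply/funext => n; rewrite -sumEFin; apply: eq_bigr => i _; rewrite mu0E //; exact: mF.
apply: cvg_EFin; first by apply: nearW.
exact: Lca.
Qed.

HB.instance Definition _ := isMeasure.Build _ (T0 N) R mu0 mu0_0 mu0_ge0 mu0_ssa.

Definition Qf : set (N.-tuple S) -> \bar R := measure_extension mu0.

Lemma QfE A : Alg A -> Qf A = (L (\1_A))%:E.
Proof.
move=> HA; rewrite /Qf /measure_extension measurable_mu_extE //; exact: mu0E.
Qed.

Let Qf0 : Qf set0 = 0%E.
Proof. exact: measure0. Qed.

Let Qf_ge0 A : (0 <= Qf A)%E.
Proof. exact: (@measure_ge0 _ _ _ (measure_extension mu0)). Qed.

Let Qf_ssa : semi_sigma_additive Qf.
Proof.
move=> F mF tF mU.
exact: (@measure_semi_sigma_additive _ _ _ (measure_extension mu0) F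
  (fun i => meas_sub (mF i)) tF (meas_sub mU)).
Qed.

HB.instance Definition _ := isMeasure.Build _ (N.-tuple S) R Qf Qf0 Qf_ge0 Qf_ssa.

Let QfT : Qf setT = 1%E.
Proof. rewrite QfE ?L1 //; by have [] := Alg_setalgebra (S:=S) N. Qed.

HB.instance Definition _ := Measure_isProbability.Build _ (N.-tuple S) R Qf QfT.

Definition Qp : probability (N.-tuple S) R := Qf.
End Meas.
Lemma perm_ext (n N : nat) (hnN : (n <= N)%N) (s : {ffun 'I_n -> 'I_N}) :
  injective s -> exists p : 'S_N, forall i, p (widen_ord hnN i) = s i.
Proof.
move=> sinj.
have hk : (n <= #|'I_N|)%N by rewrite card_ord.
have tr := ntransitive_weak hk (Sym_trans ('I_N)).
pose t1 := [tuple widen_ord hnN i | i < n].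
pose t2 := [tuple s i | i < n].
have t1in : t1 \in n.-dtuple([set: _]%SET).
  apply/dtuple_onP; split; last by move=> i; rewrite inE.
  by move=> i j; rewrite !tnth_mktuple => /(congr1 val) /= /val_inj.
have t2in : t2 \in n.-dtuple([set: _]%SET).
  apply/dtuple_onP; split; last by move=> i; rewrite inE.
  by move=> i j; rewrite !tnth_mktuple => /sinj.
have [a _ e] := atransP2 tr t1in t2in.
exists a => i.
have := congr1 (fun t => tnth t i) e; rewrite /= tnth_mktuple tnth_map tnth_mktuple.
by rewrite /= apermE => ->.
Qed.

Section Uniq.
Context {R : realType} {d : measure_display} {S : measurableType d} (k : nat).

Lemma meas_sub_rect (A : set (k.-tuple S)) : measurable A -> <<s @rectangles d S k >> A.
Proof.
rewrite /measurable /=; apply: smallest_sub; first exact: smallest_sigma_algebra.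
elim/big_ind: _ => //.
- by move=> X Y HX HY Z [/HX|/HY].
- move=> i _ Z /= [B mB <-]; apply: sub_sigma_algebra; exact: coord_rect.
Qed.

Lemma rectI : setI_closed (@rectangles d S k).
Proof.
move=> A1 A2 [B1 [m1 ->]] [B2 [m2 ->]].
exists (fun i => B1 i `&` B2 i); split; first by move=> i; exact: measurableI.
apply/seteqP; split => x /=; first by move=> [H1 H2] i; split.
by move=> H; split => i; have [] := H i.
Qed.

Lemma rectT : @rectangles d S k setT.
Proof. by exists (fun=> setT); split => //; apply/seteqP; split. Qed.

Lemma uniq_rect (m1 m2 : {measure set (k.-tuple S) -> \bar R}) :
  (m1 setT < +oo)%E -> (forall A, @rectangles d S k A -> m1 A = m2 A) ->
  forall A, measurable A -> m1 A = m2 A.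
Proof.
move=> fin h A mA.
apply: (g_sigma_algebra_measure_unique (@rectangles d S k) _ (fun=> setT)) => //.
- by move=> B /rect_meas.
- by move=> _; exact: rectT.
- by rewrite bigcup_const.
- exact: rectI.
- exact: meas_sub_rect.
Qed.
End Uniq.

Section Bmeas.
Context {R : realType} {d : measure_display} {S : measurableType d} (k : nat).

Lemma bmeas_indic (A : set (k.-tuple S)) : measurable A -> @bmeas R d S k (\1_A).
Proof.
move=> mA; split; first exact: measurable_indic.
by exists 1 => x; rewrite indicE; case: (x \in A); rewrite ?normr1 ?normr0.
Qed.

Lemma bmeas_cst (c : R) : @bmeas R d S k (fun _ => c).
Proof. by split; [exact: measurable_cst| exists `|c|]. Qed.

Lemma bmeas_lin (a b : R) f g : @bmeas R d S k f -> @bmeas R d S k g ->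
  @bmeas R d S k (fun x => a * f x + b * g x).
Proof.
move=> [mf [M1 hf]] [mg [M2 hg]]; split.
  apply: measurable_funD; apply: measurable_funM => //; exact: measurable_cst.
exists (`|a| * M1 + `|b| * M2) => x.
apply: (le_trans (ler_normD _ _)); rewrite !normrM.
by apply: lerD; apply: ler_wpM2l.
Qed.
End Bmeas.

Section LF.
Context {R : realType} {d : measure_display} {S : measurableType d}
  {dO : measure_display} {Omega : measurableType dO} (P : probability Omega R)
  (n N : nat) (hnN : (n <= N)%N) (X : Omega -> n.-tuple S)
  (L : (N.-tuple S -> R) -> R).
Hypothesis mX : measurable_fun setT X.
Hypothesis Hext : extending_functional P X L.
Hypothesis Hnorm : norm_functional L = 1%E.

Let Llin : forall (a b : R) f g, bmeas f -> bmeas g ->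
          L (fun x => a * f x + b * g x) = a * L f + b * L g.
Proof. by case: Hext. Qed.
Let Lperm : forall (s : 'S_N) f, bmeas f -> L (f \o perm_tuple s) = L f.
Proof. by case: Hext. Qed.
Let LUN : forall g, bmeas g -> L (@UN R d S N n g) = expect P X g.
Proof. by case: Hext. Qed.

Lemma ffact_neq0 : (N ^_ n)%:R != 0 :> R.
Proof. by rewrite pnatr_eq0 -lt0n ffact_gt0. Qed.

Lemma card_inj : #|[pred s : {ffun 'I_n -> 'I_N} | injectiveb s]| = (N ^_ n)%N.
Proof.
have := card_inj_ffuns 'I_n 'I_N; rewrite !card_ord => <-.
by apply: eq_card => s; rewrite !inE.
Qed.

Lemma UN_cst (c : R) : @UN R d S N n (fun _ => c) = fun _ => c.
Proof.
apply/funext => x; rewrite /UN sumr_const.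
rewrite (_ : #|_| = N ^_ n)%N; last by rewrite -card_inj; apply: eq_card.
rewrite -(mulr_natr c) mulrCA mulVf ?mulr1 //; exact: ffact_neq0.
Qed.

Lemma L_cst (c : R) : L (fun _ => c) = c.
Proof.
rewrite -[in LHS]UN_cst LUN; last exact: bmeas_cst.
rewrite /expect (_ : (fun w => _) = cst c%:E) //.
rewrite integral_cst // [X in (_ * X)%E](_ : _ = 1%E) ?mule1 //; exact: probability_setT.
Qed.

Lemma L_scale (c : R) f : bmeas f -> L (fun x => c * f x) = c * L f.
Proof.
move=> bf; have -> : (fun x => c * f x) = (fun x => c * f x + 0 * f x).
  by apply/funext => x; rewrite mul0r addr0.
by rewrite Llin // mul0r addr0.
Qed.

Lemma L_add f g : bmeas f -> bmeas g -> L (fun x => f x + g x) = L f + L g.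
Proof.
move=> bf bg; have -> : (fun x => f x + g x) = (fun x => 1 * f x + 1 * g x).
  by apply/funext => x; rewrite !mul1r.
by rewrite Llin // !mul1r.
Qed.

Lemma bmeas_add (k : nat) (f g : k.-tuple S -> R) : bmeas f -> bmeas g ->
  bmeas (fun x => f x + g x).
Proof.
move=> bf bg; have := bmeas_lin 1 1 bf bg.
by rewrite (_ : (fun x => 1 * f x + 1 * g x) = (fun x => f x + g x)) //;
  apply/funext => x; rewrite !mul1r.
Qed.

Lemma bmeas_sum (k : nat) (I : Type) (r : seq I) (Pr : pred I)
  (h : I -> k.-tuple S -> R) : (forall i, bmeas (h i)) ->
  bmeas (fun x => \sum_(i <- r | Pr i) h i x).
Proof.
move=> bh; elim: r => [|a r IH].
  by rewrite (_ : (fun x => _) = fun _ => 0); [exact: bmeas_cst|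
    apply/funext => x; rewrite big_nil].
case: (boolP (Pr a)) => Pa.
  rewrite (_ : (fun x => _) = fun x => h a x + \sum_(i <- r | Pr i) h i x).
    exact: bmeas_add.
  by apply/funext => x; rewrite big_cons Pa.
rewrite (_ : (fun x => _) = fun x => \sum_(i <- r | Pr i) h i x) //.
by apply/funext => x; rewrite big_cons (negbTE Pa).
Qed.

Lemma L_sum (I : Type) (r : seq I) (Pr : pred I)
  (h : I -> N.-tuple S -> R) : (forall i, bmeas (h i)) ->
  L (fun x => \sum_(i <- r | Pr i) h i x) = \sum_(i <- r | Pr i) L (h i).
Proof.
move=> bh; elim: r => [|a r IH].
  rewrite big_nil (_ : (fun x => _) = fun _ => 0) ?L_cst //.
  by apply/funext => x; rewrite big_nil.
case: (boolP (Pr a)) => Pa.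
  rewrite big_cons Pa (_ : (fun x => _) = fun x => h a x + \sum_(i <- r | Pr i) h i x).
    by rewrite L_add ?IH //; exact: bmeas_sum.
  by apply/funext => x; rewrite big_cons Pa.
rewrite big_cons (negbTE Pa) (_ : (fun x => _) = fun x => \sum_(i <- r | Pr i) h i x) //.
by apply/funext => x; rewrite big_cons (negbTE Pa).
Qed.

Lemma L_pos (A : set (N.-tuple S)) : measurable A -> 0 <= L (\1_A).
Proof.
move=> mA.
pose f := fun x => 1 * (fun _ : N.-tuple S => (1 : R)) x + (-2) * \1_A x.
have bf : bmeas f by apply: bmeas_lin; [exact: bmeas_cst|exact: bmeas_indic].
have f1 : forall x, `|f x| <= 1.
  move=> x; rewrite /f indicE; by case: (x \in A) => /=; rewrite ler_norml; apply/andP; split; lra.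
have : ((`|L f|)%:E <= norm_functional L)%E.
  by apply: ereal_sup_ubound; exists f.
rewrite Hnorm lee_fin /f Llin ?L_cst; [|exact: bmeas_cst|exact: bmeas_indic].
rewrite ler_norml => /andP[h1 h2]; lra.
Qed.

Lemma L_indic_perm (s : 'S_N) (A : set (N.-tuple S)) : measurable A ->
  L (\1_(perm_tuple s @^-1` A)) = L (\1_A).
Proof.
by move=> mA; rewrite -(Lperm s (bmeas_indic mA)).
Qed.

Definition cylmap (x : N.-tuple S) : n.-tuple S := [tuple tnth x (widen_ord hnN i) | i < n].

Lemma mcylmap : measurable_fun setT cylmap.
Proof.
apply/measurable_fun_tnthP => i.
rewrite (_ : _ \o _ = fun x => tnth x (widen_ord hnN i)); first exact: measurable_tnth.
by apply/funext => x; rewrite /= tnth_mktuple.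
Qed.

Lemma mperm (s : 'S_N) : measurable_fun setT (@perm_tuple d S N s).
Proof.
apply/measurable_fun_tnthP => i.
rewrite (_ : _ \o _ = fun x => tnth x (s i)); first exact: measurable_tnth.
by apply/funext => x; rewrite /= tnth_mktuple.
Qed.

Definition pf (s : {ffun 'I_n -> 'I_N}) : 'S_N :=
  odflt 1%g [pick p : 'S_N | [forall i, p (widen_ord hnN i) == s i]].

Lemma pfE (s : {ffun 'I_n -> 'I_N}) : injectiveb s -> forall i, pf s (widen_ord hnN i) = s i.
Proof.
move=> /injectiveP sinj; rewrite /pf; case: pickP => [p /forallP H i|H].
  exact/eqP.
have [p Hp] := perm_ext hnN sinj.
by have := H p; move/negbT/forallPn => [i]; rewrite Hp eqxx.
Qed.

Lemma L_cyl (A : set (n.-tuple S)) : measurable A ->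
  L (\1_(cylmap @^-1` A)) = fine (P (X @^-1` A)).
Proof.
move=> mA.
have mC : measurable (cylmap @^-1` A).
  by rewrite -[X in measurable X]setTI; exact: mcylmap.
have bA : bmeas (\1_A : n.-tuple S -> R) by exact: bmeas_indic.
have bh : forall s, bmeas ((\1_(cylmap @^-1` A) : _ -> R) \o perm_tuple (pf s)).
  move=> s; apply: (bmeas_indic (A := perm_tuple (pf s) @^-1` (cylmap @^-1` A))).
  by rewrite -[X in measurable X]setTI; exact: mperm.
have := LUN bA.
have -> : @UN R d S N n (\1_A) = fun x => (N ^_ n)%:R^-1 *
    \sum_(s : {ffun 'I_n -> 'I_N} | injectiveb s)
       ((\1_(cylmap @^-1` A) : _ -> R) \o perm_tuple (pf s)) x.
  apply/funext => x; rewrite /UN; congr (_ * _); apply: eq_bigr => s sinj.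
  rewrite /= !indicE; congr (_%:R).
  have -> : (perm_tuple (pf s) x \in cylmap @^-1` A) =
    (cylmap (perm_tuple (pf s) x) \in A) by [].
  suff -> : cylmap (perm_tuple (pf s) x) = [tuple tnth x (s i) | i < n] by [].
  apply: eq_from_tnth => i; rewrite /cylmap /perm_tuple !tnth_mktuple.
  by rewrite pfE.
rewrite L_scale; last exact: bmeas_sum.
rewrite L_sum //.
rewrite (eq_bigr (fun _ => L (\1_(cylmap @^-1` A)))); last first.
  by move=> s _; rewrite Lperm //; exact: bmeas_indic.
rewrite sumr_const (_ : #|_| = N ^_ n)%N; last by rewrite -card_inj; apply: eq_card.
rewrite -(mulr_natr (L _)) mulrCA mulVf ?mulr1; last exact: ffact_neq0.
move=> ->; rewrite /expect.
rewrite (_ : (fun w => _) = (fun w => (\1_(X @^-1` A) w)%:E)) //.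
rewrite integral_indic ?setIT //.
by rewrite -[X in measurable X]setTI; exact: mX.
Qed.
End LF.

Section PF.
Context {R : realType} {d1 d2 : measure_display} {T1 : measurableType d1}
  {T2 : measurableType d2} (m : {measure set T1 -> \bar R}) (f : T1 -> T2)
  (mf : measurable_fun setT f).

Definition pfw (mf' : measurable_fun setT f) : set T2 -> \bar R :=
  fun A => m (f @^-1` A).

Let pfw0 : pfw mf set0 = 0%E.
Proof. by rewrite /pfw preimage_set0 measure0. Qed.

Let pfw_ge0 A : (0 <= pfw mf A)%E.
Proof. by apply: measure_ge0; rewrite -[X in measurable X]setIT; apply: mf. Qed.

Let pfw_ssa : semi_sigma_additive (pfw mf).
Proof.
move=> F mF tF mUF; rewrite /pfw preimage_bigcup.
apply: measure_semi_sigma_additive.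
- by move=> n; rewrite -[X in measurable X]setTI; exact: mf.
- apply/trivIsetP => /= i j _ _ ij; rewrite -preimage_setI.
  by move/trivIsetP : tF => /(_ _ _ _ _ ij) ->//; rewrite preimage_set0.
- by rewrite -preimage_bigcup -[X in measurable X]setTI; exact: mf.
Qed.

HB.instance Definition _ := isMeasure.Build _ T2 R (pfw mf) pfw0 pfw_ge0 pfw_ssa.
End PF.

Lemma perm_rect {d : measure_display} {S : measurableType d} (N : nat) (s : 'S_N)
  (A : set (N.-tuple S)) : rectangles A -> rectangles (perm_tuple s @^-1` A).
Proof.
move=> [B [mB ->]]; exists (fun j => B (s^-1 j)%g); split => //.
apply/seteqP; split => x /=.
  move=> H j; have := H (s^-1 j)%g; rewrite /perm_tuple tnth_mktuple.
  by rewrite permKV.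
move=> H i; rewrite /perm_tuple tnth_mktuple; have := H (s i).
by rewrite permK.
Qed.

Lemma cyl_rect {d : measure_display} {S : measurableType d} (n N : nat)
  (hnN : (n <= N)%N) (A : set (n.-tuple S)) : rectangles A ->
  rectangles (cylmap hnN @^-1` A).
Proof.
move=> [B [mB ->]].
exists (fun j : 'I_N => if @insub _ (fun k => k < n)%N _ (val j) is Some i then B i else setT).
split; first by move=> j; case: insubP.
apply/seteqP; split => x /=.
  move=> H j; case: insubP => [i _ vi|] //.
  have := H i; rewrite /cylmap tnth_mktuple.
  by rewrite (_ : widen_ord hnN i = j) //; apply: val_inj.
move=> H i; rewrite /cylmap tnth_mktuple; have := H (widen_ord hnN i).
case: insubP => [i' _ vi'|] /=; last by rewrite ltn_ord.
by rewrite (_ : i' = i) //; apply: val_inj.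
Qed.

Lemma prob_ltey {R : realType} {d : measure_display} {T : measurableType d}
  (Q : probability T R) (A : set T) : measurable A -> (Q A < +oo)%E.
Proof. by move=> mA; have /fin_numPlt/andP[_ ->] := fin_num_measure Q A mA. Qed.

Theorem lemma10 (R : realType) (d : measure_display) (S : measurableType d)
  (dO : measure_display) (Omega : measurableType dO) (P : probability Omega R)
  (n N : nat) (hnN : (n <= N)%N) (X : Omega -> n.-tuple S)
  (L : (N.-tuple S -> R) -> R) :
  measurable_fun setT X ->
  (forall (s : 'S_n) (A : set (n.-tuple S)), measurable A ->
     P (X @^-1` (perm_tuple s @^-1` A)) = P (X @^-1` A)) ->
  extending_functional P X L ->
  norm_functional L = 1%E ->
  countably_additive_on (smallest (@setalgebra _) (@rectangles d S N))
    (fun A => L (\1_A)) ->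
  exists Q : probability (N.-tuple S) R,
    [/\ exchangeable_measure Q,
        (forall A, rectangles A -> Q A = (L (\1_A))%:E),
        (forall A : set (n.-tuple S), measurable A ->
           Q [set x | A [tuple tnth x (widen_ord hnN i) | i < n]] = P (X @^-1` A)) &
        (forall Q' : probability (N.-tuple S) R,
           exchangeable_measure Q' ->
           (forall A, rectangles A -> Q' A = (L (\1_A))%:E) ->
           forall A, measurable A -> Q' A = Q A)].
Proof.
move=> mX _ Hext Hnorm Hca.
have Lpos : forall A, @Alg d S N A -> 0 <= L (\1_A).
  by move=> A hA; apply: (L_pos hnN Hext Hnorm); exact: Alg_meas.
have L0 : L (\1_set0) = 0.
  rewrite (_ : \1_set0 = fun _ => 0); first exact: (L_cst hnN Hext).
  by apply/funext => x; rewrite indicE in_set0.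
have L1 : L (\1_setT) = 1.
  rewrite (_ : \1_setT = fun _ => 1); first exact: (L_cst hnN Hext).
  by apply/funext => x; rewrite indicE in_setT.
pose Q := Qp Lpos L0 Hca L1.
have QE : forall A, Alg A -> Q A = (L (\1_A))%:E by move=> A hA; exact: QfE.
have QR : forall A, rectangles A -> Q A = (L (\1_A))%:E.
  by move=> A hA; apply: QE; exact: rect_Alg.
exists Q; split => //.
- move=> s A mA.
  change (pfw Q (mperm s) A = Q A).
  apply: uniq_rect => //; first exact: (prob_ltey Q measurableT).
  move=> B hB; rewrite /pfw.
  transitivity (L (\1_(perm_tuple s @^-1` B)))%:E; first exact: QR (perm_rect s hB).
  rewrite (L_indic_perm Hext); last exact: rect_meas.
  exact/esym/QR.
- move=> A mA.
  change (pfw Q (mcylmap hnN) A = pfw P mX A).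
  apply: uniq_rect => //; first exact: (prob_ltey Q measurableT).
  move=> B hB; rewrite /pfw.
  transitivity (L (\1_(cylmap hnN @^-1` B)))%:E; first exact: QR (cyl_rect hnN hB).
  have mB : measurable (X @^-1` B).
    by rewrite -[X in measurable X]setTI; apply: mX => //; exact: rect_meas.
  rewrite (L_cyl hnN mX Hext) ?fineK //; last exact: rect_meas.
  exact: fin_num_measure.
- move=> Q' _ hQ' A mA.
  apply: uniq_rect => //; first exact: (prob_ltey Q' measurableT).
  move=> B hB; transitivity (L (\1_B))%:E; first exact: hQ'.
  exact/esym/QR.
Qed.
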